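(* Let $\alpha, \beta, \gamma$ be distinct elements of the finite field $\mathbb{F}_q$. If $a_1, a_2, a_3 \in \mathbb{F}_q^*$ satisfy \[ 0 = \alpha(a_2 - a_1) + \beta(a_3 - a_2) + \gamma(a_1 - a_3) \] and \[ 0 = \alpha(a_2^2 - a_1^2) + \beta(a_3^2 - a_2^2) + \gamma(a_1^2 - a_3^2), \] then $a_1 = a_2 = a_3$.
   Context: $\mathbb{F}_q$ is the finite field with $q$ elements and $\mathbb{F}_q^* = \mathbb{F}_q \setminus \{0\}$. *)

(* Defs.v *)
From mathcomp Require Import all_boot all_order all_algebra all_field.

(* Main.v *)
Require Import Defs.
From mathcomp Require Import all_boot all_order all_algebra all_field.
From mathcomp Require Import ring.
Import GRing.Theory.
Local Open Scope ring_scope.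

Theorem lemma3p3 (F : finFieldType) (alpha beta gamma a1 a2 a3 : F) :
  alpha != beta -> beta != gamma -> alpha != gamma ->
  a1 != 0 -> a2 != 0 -> a3 != 0 ->
  alpha * (a2 - a1) + beta * (a3 - a2) + gamma * (a1 - a3) = 0 ->
  alpha * (a2 ^+ 2 - a1 ^+ 2) + beta * (a3 ^+ 2 - a2 ^+ 2)
    + gamma * (a1 ^+ 2 - a3 ^+ 2) = 0 ->
  a1 = a2 /\ a2 = a3.
Proof.
move=> hab hbc hac _ _ _ E1 E2.
have K : (alpha - gamma) * (a2 - a1) * (a1 - a3) = 0.
  have -> : (alpha - gamma) * (a2 - a1) * (a1 - a3) =
    (alpha * (a2 ^+ 2 - a1 ^+ 2) + beta * (a3 ^+ 2 - a2 ^+ 2)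
    + gamma * (a1 ^+ 2 - a3 ^+ 2)) - (a2 + a3) *
    (alpha * (a2 - a1) + beta * (a3 - a2) + gamma * (a1 - a3)) by ring.
  by rewrite E1 E2; ring.
have hag : alpha - gamma != 0 by rewrite subr_eq0.
have hbg : beta - gamma != 0 by rewrite subr_eq0.
have hab' : alpha - beta != 0 by rewrite subr_eq0.
move/eqP: K; rewrite !mulf_eq0 (negbTE hag) /= => /orP [] /eqP H.
- have e12 : a2 = a1 by apply/eqP; rewrite -subr_eq0 H.
  split => //.
  have : (beta - gamma) * (a3 - a2) = 0.
    by rewrite -E1 e12; ring.
  move/eqP; rewrite mulf_eq0 (negbTE hbg) /= subr_eq0 => /eqP ->.
  by [].
- have e13 : a1 = a3 by apply/eqP; rewrite -subr_eq0 H.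
  have : (alpha - beta) * (a2 - a1) = 0.
    by rewrite -E1 -e13; ring.
  move/eqP; rewrite mulf_eq0 (negbTE hab') /= subr_eq0 => /eqP e.
  by rewrite e -e13.
Qed.
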